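(* Let $m,K$ be positive integers and $b_1,\dots,b_{3m}$ positive integers with $K/4<b_i<K/2$ and $\sum_i b_i=mK$. Set $W=100(5m)^2K$, $a_i=b_i+W$, $L=3W+K$, $\epsilon=1/(400(5m)^2)$, $h=\lfloor 4\epsilon L\rfloor$, $H=L+h$, $\beta_0=h/H$, $\beta_i=a_i/H-1/3$ ($1\le i\le 3m$). Let $X$ be the multiset consisting of $a_1,\dots,a_{3m}$, $m$ copies of $-H$ and $m$ copies of $h$, and let $T_{\min}$ be a minimum-cost addition tree over $X$. Then in $T_{\min}$, if two sibling nodes are such that one of them is a type-0 node, the other is also a type-0 node.
   Context: An addition tree over a multiset $X$ is a full binary tree whose leaves are labeled by the elements of $X$ (each used once), each internal node having value equal to the sum of its children's values; its cost is the sum of the absolute values of its internal nodes, and $T_{\min}$ minimizes the cost. A ''$\lambda$'' denotes a sum of at most $5m$ numbers each of the form $\pm\beta_i$ with $0\le i\le 3m$. Every node value of an addition tree over $X$ can be written as $(N/3+\lambda)H$ with $N$ an integer and $\lambda$ such a sum; since $|\lambda|\le 5m\cdot 4\epsilon=1/(500m)$, the integer $N$ and the real number $\lambda$ are uniquely determined. A node is type-0 if its value is of the form $\lambda H$, i.e. $N=0$. *)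

(* Defs.v *)
From mathcomp Require Import all_boot all_order all_algebra.
Set Implicit Arguments. Unset Strict Implicit. Unset Printing Implicit Defensive.
Import Order.TTheory GRing.Theory Num.Theory.
Local Open Scope ring_scope.

Inductive atree := ALeaf of rat | ANode of atree & atree.

Fixpoint tval (t : atree) : rat :=
  match t with ALeaf x => x | ANode l r => tval l + tval r end.

Fixpoint leaves (t : atree) : seq rat :=
  match t with ALeaf x => [:: x] | ANode l r => leaves l ++ leaves r end.

Fixpoint cost (t : atree) : rat :=
  match t with ALeaf _ => 0 | ANode l r => `|tval (ANode l r)| + cost l + cost r end.

Definition addition_tree_over (X : seq rat) (t : atree) : Prop :=
  perm_eq (leaves t) X.

Definition min_cost_tree (X : seq rat) (t : atree) : Prop :=
  addition_tree_over X t /\ forall t', addition_tree_over X t' -> cost t <= cost t'.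

Inductive subtree (s : atree) : atree -> Prop :=
| sub_refl : subtree s s
| sub_l : forall l r, subtree s l -> subtree s (ANode l r)
| sub_r : forall l r, subtree s r -> subtree s (ANode l r).

Section Construction.
Variables (m K : nat) (b : nat -> nat).

Definition W : rat := 100 * ((5 * m)%:R) ^+ 2 * K%:R.
Definition a (i : nat) : rat := (b i)%:R + W.
Definition L : rat := 3 * W + K%:R.
Definition eps : rat := (400 * ((5 * m)%:R) ^+ 2)^-1.
Definition h : rat := (Num.floor (4 * eps * L))%:~R.
Definition H : rat := L + h.
Definition beta (i : nat) : rat :=
  if i == 0%N then h / H else a i / H - 3^-1.

Definition Xset : seq rat :=
  [seq a i | i <- iota 1 (3 * m)] ++ nseq m (- H) ++ nseq m h.

(* a "lambda": a sum of at most 5m numbers of the form +-beta_i, 0<=i<=3m;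
   a signed term is encoded as (negate?, i) *)
Definition lambda_sum (s : seq (bool * nat)) : rat :=
  \sum_(p <- s) (if p.1 then - beta p.2 else beta p.2).
Definition is_lambda_seq (s : seq (bool * nat)) : bool :=
  (size s <= 5 * m)%N && all (fun p => (p.2 <= 3 * m)%N) s.

Definition type0 (t : atree) : Prop :=
  exists s, is_lambda_seq s /\ tval t = lambda_sum s * H.

End Construction.

(* Main.v *)
From Pilot Require Import Defs.
From mathcomp Require Import all_boot all_order all_algebra.
From mathcomp Require Import zify ring lra.
Import Pilot.Defs.
Import Order.TTheory GRing.Theory Num.Theory.
Local Open Scope ring_scope.

Lemma tval_sum t : tval t = \sum_(x <- leaves t) x.
Proof. elim: t => [x|l IHl r IHr] /=; first by rewrite big_seq1. by rewrite big_cat /= IHl IHr. Qed.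

Lemma size_leaves_gt0 t : (0 < size (leaves t))%N.
Proof. elim: t => [x|l IHl r IHr] //=; rewrite size_cat; lia. Qed.

Lemma cost_ge0 t : 0 <= cost t.
Proof. elim: t => [x|l IHl r IHr] //=. rewrite addr_ge0 // addr_ge0 //. Qed.

Lemma subtree_leaves s t : subtree s t ->
  {subset leaves s <= leaves t} /\ (size (leaves s) <= size (leaves t))%N.
Proof.
elim => [|l r _ [IH1 IH2]|l r _ [IH1 IH2]] /=; first by split.
- split; first by move=> x /IH1 Hx; rewrite mem_cat Hx.
  rewrite size_cat; lia.
- split; first by move=> x /IH1 Hx; rewrite mem_cat Hx orbT.
  rewrite size_cat; lia.
Qed.

Lemma extract_l T l r : subtree (ANode l r) T -> exists T',
  perm_eq (leaves T) (leaves T' ++ leaves l) /\ tval T' = tval T - tval l /\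
  cost T' + cost l <= cost T - `|tval l + tval r| + (size (leaves T))%:R * `|tval l|.
Proof.
elim.
- exists r; split; first by rewrite /= perm_catC.
  split; first by rewrite /=; ring.
  rewrite /=. have := normr_ge0 (tval l). have := ler0n rat (size (leaves l ++ leaves r)).
  move=> h1 h2. have := mulr_ge0 h1 h2. lra.
- move=> T1 T2 _ [T1' [Hp [Hv Hc]]]. exists (ANode T1' T2). split.
    apply/permP => q; move/permP: Hp => /(_ q). rewrite /= !count_cat. lia.
  split; first by rewrite /= Hv; ring.
  rewrite /= Hv size_cat natrD.
  have := ler_normB (tval T1 + tval T2) (tval l).
  have : 1 <= (size (leaves T2))%:R :> rat by rewrite ler1n size_leaves_gt0.
  move=> h1 h2. have := normr_ge0 (tval l) => h3.
  have := ler_wpM2r h3 h1. rewrite mul1r. 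
  rewrite (_ : tval T1 - tval l + tval T2 = tval T1 + tval T2 - tval l); last by ring. lra.
- move=> T1 T2 _ [T2' [Hp [Hv Hc]]]. exists (ANode T1 T2'). split.
    apply/permP => q; move/permP: Hp => /(_ q). rewrite /= !count_cat. lia.
  split; first by rewrite /= Hv; ring.
  rewrite /= Hv size_cat natrD.
  have := ler_normB (tval T1 + tval T2) (tval l).
  have : 1 <= (size (leaves T1))%:R :> rat by rewrite ler1n size_leaves_gt0.
  move=> h1 h2. have := normr_ge0 (tval l) => h3.
  have := ler_wpM2r h3 h1. rewrite mul1r.
  rewrite (_ : tval T1 + (tval T2 - tval l) = tval T1 + tval T2 - tval l); last by ring.
  lra.
Qed.

Lemma extract_r T l r : subtree (ANode l r) T -> exists T',
  perm_eq (leaves T) (leaves T' ++ leaves r) /\ tval T' = tval T - tval r /\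
  cost T' + cost r <= cost T - `|tval l + tval r| + (size (leaves T))%:R * `|tval r|.
Proof.
elim.
- exists l; split; first by rewrite /=.
  split; first by rewrite /=; ring.
  rewrite /=. have := normr_ge0 (tval r). have := ler0n rat (size (leaves l ++ leaves r)).
  move=> h1 h2. have := mulr_ge0 h1 h2. lra.
- move=> T1 T2 _ [T1' [Hp [Hv Hc]]]. exists (ANode T1' T2). split.
    apply/permP => q; move/permP: Hp => /(_ q). rewrite /= !count_cat. lia.
  split; first by rewrite /= Hv; ring.
  rewrite /= Hv size_cat natrD.
  have := ler_normB (tval T1 + tval T2) (tval r).
  have : 1 <= (size (leaves T2))%:R :> rat by rewrite ler1n size_leaves_gt0.
  move=> h1 h2. have := normr_ge0 (tval r) => h3.
  have := ler_wpM2r h3 h1. rewrite mul1r. 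
  rewrite (_ : tval T1 - tval r + tval T2 = tval T1 + tval T2 - tval r); last by ring. lra.
- move=> T1 T2 _ [T2' [Hp [Hv Hc]]]. exists (ANode T1 T2'). split.
    apply/permP => q; move/permP: Hp => /(_ q). rewrite /= !count_cat. lia.
  split; first by rewrite /= Hv; ring.
  rewrite /= Hv size_cat natrD.
  have := ler_normB (tval T1 + tval T2) (tval r).
  have : 1 <= (size (leaves T1))%:R :> rat by rewrite ler1n size_leaves_gt0.
  move=> h1 h2. have := normr_ge0 (tval r) => h3.
  have := ler_wpM2r h3 h1. rewrite mul1r.
  rewrite (_ : tval T1 + (tval T2 - tval r) = tval T1 + tval T2 - tval r); last by ring.
  lra.
Qed.

Lemma arith (tu tv lu lv Nr y e M : rat) :
  0 < y -> 0 < e -> 1 <= M -> 100 * (M^+2 * e) = 1/100 -> 40 * (M * e) <= 1/250 ->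
  `|lu| <= 5*M*(4*e) -> `|lv| <= 5*M*(4*e) ->
  tu = lu * y -> tv = (Nr/3 + lv) * y -> `|tu + tv| <= 5*M*`|tu| ->
  (1 <= Nr \/ Nr <= -1) -> False.
Proof.
move=> hy he hM hM2 hMe hlu hlv Htu Htv Hn HN.
have A : `|tu| <= 5*M*(4*e)*y.
  rewrite Htu normrM (gtr0_norm hy). by rewrite ler_pM2r.
have B : `|lv * y| <= 5*M*(4*e)*y.
  rewrite normrM (gtr0_norm hy). by rewrite ler_pM2r.
have C : M * `|tu| <= M * (5*M*(4*e)*y) by apply: ler_wpM2l A; lra.
have K1 : (5*M+2)*(5*M*(4*e)) < 1/3.
  rewrite (_ : (5*M+2)*(5*M*(4*e)) = 100*(M^+2*e) + 40*(M*e)); last by ring.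
  rewrite hM2. move: (40 * (M * e)) hMe => z hz. lra.
have K2 : (5*M+2)*(5*M*(4*e)*y) < y/3.
  rewrite mulrA (_ : y/3 = 1/3 * y); last by ring.
  by rewrite ltr_pM2r.
have E : y <= Nr * y \/ Nr * y <= - y.
  case: HN => h; [left | right].
    rewrite -subr_ge0 (_ : Nr*y - y = (Nr - 1)*y); last by ring.
    apply: mulr_ge0; [lra | exact: ltW].
  rewrite -subr_ge0 (_ : -y - Nr*y = (-1 - Nr)*y); last by ring.
  apply: mulr_ge0; [lra | exact: ltW].
have Tv : tv = Nr * y / 3 + lv * y by rewrite Htv; ring.
have T1 := ler_norm (tu + tv).
have T2 : -(tu+tv) <= `|tu + tv| by rewrite -normrN ler_norm.
have T3 := ler_norm tu.
have T4 : -tu <= `|tu| by rewrite -normrN ler_norm.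
have B1 := ler_normlW B. have B2 := lerNnormlW B.
move: (5*M*(4*e)*y) A B1 B2 C K2 => D A B1 B2 C K2.
rewrite mulrDl -mulrA in K2.
rewrite -mulrA in Hn.
move: (M * D) C K2 => MD C K2.
move: (M * `|tu|) C Hn => Mt C Hn.
move: (`|tu + tv|) T1 T2 Hn => n1 T1 T2 Hn.
move: (`|tu|) A T3 T4 => n2 A T3 T4.
move: (Nr * y) E Tv => ny E Tv.
move: (lv * y) B1 B2 Tv => ly B1 B2 Tv.
lra.
Qed.

Lemma lin1 (x y : rat) : 100 * y = 1/100 -> x <= y -> 40 * x <= 1/250.
Proof. move=> h1 h2; lra. Qed.

Lemma int_cases (N : int) : N != 0 -> 1 <= (N%:~R : rat) \/ (N%:~R : rat) <= -1.
Proof.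
move=> N0.
have : (1 <= N)%R \/ (N <= -1)%R by move/eqP: N0; lia.
case=> hN; [left; by rewrite ler1z | right].
have : 1 <= ((- N)%:~R : rat) by rewrite ler1z; lia.
rewrite mulrNz lerNr. done.
Qed.

Section Main.
Variables (m K : nat) (b : nat -> nat).
Hypotheses (Hm : (0 < m)%N) (HK : (0 < K)%N)
  (Hb : forall i, (1 <= i <= 3 * m)%N ->
     (K%:R / 4 < (b i)%:R :> rat) /\ ((b i)%:R < K%:R / 2 :> rat))
  (Hs : (\sum_(1 <= i < (3 * m).+1) b i = m * K)%N).

Local Notation Mr := (m%:R : rat).
Local Notation Kr := (K%:R : rat).

Lemma Mr_ge1 : 1 <= Mr.
Proof. by rewrite ler1n. Qed.
Lemma Kr_gt0 : 0 < Kr.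
Proof. by rewrite ltr0n. Qed.

Lemma epsE : eps m = (10000 * Mr ^+ 2)^-1.
Proof. rewrite /eps natrM. move: Mr => x. congr (_^-1). ring. Qed.

Lemma eps_gt0 : 0 < eps m.
Proof. rewrite epsE; have := Mr_ge1; move: Mr => x hx; rewrite invr_gt0; apply: mulr_gt0; [lra | apply: exprn_gt0; lra]. Qed.

Lemma Mr2eps : Mr ^+ 2 * eps m = 1 / 10000.
Proof. rewrite epsE; have := Mr_ge1; move: Mr => x hx; field; apply: lt0r_neq0; lra. Qed.

Lemma Mreps : Mr * eps m <= 1 / 10000.
Proof.
rewrite -Mr2eps expr2 -mulrA. have h1 := Mr_ge1. have h2 : 0 <= Mr * eps m.
  by apply: mulr_ge0; [lra | exact: ltW eps_gt0].
have := ler_wpM2r h2 h1. rewrite mul1r. done.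
Qed.

Lemma epsW : eps m * W m K = Kr / 4.
Proof. rewrite epsE /W natrM; have := Mr_ge1; move: Mr Kr => x y hx; field; apply: lt0r_neq0; lra. Qed.

Ltac abstr :=
  try (let H0 := fresh "H0" in set (H0 := H m K) in *; clearbody H0);
  try (let L0 := fresh "L0" in set (L0 := L m K) in *; clearbody L0);
  try (let h0 := fresh "h0" in set (h0 := h m K) in *; clearbody h0);
  try (let W0 := fresh "W0" in set (W0 := W m K) in *; clearbody W0);
  try (let e0 := fresh "e0" in set (e0 := eps m) in *; clearbody e0);
  try (let M0 := fresh "M0" in set (M0 := (m%:R : rat)) in *; clearbody M0);
  try (let K0 := fresh "K0" in set (K0 := (K%:R : rat)) in *; clearbody K0).

Lemma W_ge0 : 0 <= W m K.
Proof.
rewrite /W; have := Kr_gt0; move: ((5 * m)%:R : rat) Kr => x y hy.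
apply: mulr_ge0; [apply: mulr_ge0; [lra| exact: sqr_ge0] | lra].
Qed.

Lemma h_ge0 : 0 <= h m K.
Proof.
rewrite /h ler0z floor_ge0 /L. have := eps_gt0. have := Kr_gt0.
move=> h1 h2. have h3 := W_ge0. abstr. apply: mulr_ge0; lra.
Qed.

Lemma h_le : h m K <= 4 * eps m * L m K.
Proof. exact: floor_le. Qed.

Lemma epsL : eps m * L m K = 3 * Kr / 4 + eps m * Kr.
Proof. rewrite /L mulrDr. rewrite (mulrCA _ 3) epsW. abstr; ring. Qed.

Lemma H_gt0 : 0 < H m K.
Proof.
rewrite /H. have ? := h_ge0. have ? : 0 < L m K.
  rewrite /L. have := Kr_gt0. have := W_ge0. move=> ? ?. abstr.
  lra.
abstr; lra.
Qed.

Lemma beta_bound i : (i <= 3 * m)%N -> `|beta m K b i| <= 4 * eps m.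
Proof.
move=> Hi. have HH := H_gt0. have he := eps_gt0. have hh0 := h_ge0.
have hle := h_le. have eL := epsL. have hK := Kr_gt0.
have HE : H m K = L m K + h m K by [].
have LE : L m K = 3 * W m K + Kr by [].
rewrite /beta. case: eqP => [_|/eqP i0].
  abstr.
  have ? : 0 <= e0 * h0 by apply: mulr_ge0 => //; lra.
  rewrite ger0_norm; last by apply: divr_ge0; lra.
  rewrite ler_pdivrMr // HE mulrDr. lra.
have [hb1 hb2] : (K%:R / 4 < (b i)%:R :> rat) /\ ((b i)%:R < K%:R / 2 :> rat).
  apply: Hb; rewrite Hi andbT; lia.
have aE : a m K b i = (b i)%:R + W m K by [].
have hb1' : Kr / 4 < (b i)%:R by exact: hb1.
have hb2' : (b i)%:R < Kr / 2 by exact: hb2.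
clear hb1 hb2.
rewrite aE. move: hb1' hb2'. move: ((b i)%:R : rat) => bi hb1 hb2.
abstr.
have ? : 0 <= e0 * h0 by apply: mulr_ge0 => //; lra.
have ? : 0 <= e0 * K0 by apply: mulr_ge0 => //; lra.
have -> : (bi + W0) / H0 - 3^-1 = (3 * bi - K0 - h0) / (3 * H0).
  rewrite HE LE. field. rewrite -LE -HE. apply: lt0r_neq0; lra.
rewrite normrM [`|(3 * H0)^-1|]ger0_norm; last by rewrite invr_ge0; lra.
rewrite ler_pdivrMr; last by lra.
rewrite ler_norml.
have -> : 4 * e0 * (3 * H0) = 12 * (e0 * H0) by ring.
rewrite HE mulrDr. lra.
Qed.

Lemma lambda_bound s : all (fun p : bool * nat => (p.2 <= 3 * m)%N) s ->
  `|lambda_sum m K b s| <= (size s)%:R * (4 * eps m).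
Proof.
elim: s => [|[c i] s IH] /=; first by rewrite /lambda_sum big_nil normr0 mul0r.
move=> /andP [Hi Hs'].
have hb := @beta_bound i Hi. have := IH Hs'.
rewrite {2}/lambda_sum big_cons /= -/(lambda_sum m K b s).
move: (lambda_sum m K b s) (beta m K b i) (4 * eps m) hb => x y d hb hx.
have hy : `|(if c then - y else y)| <= d by case: c; rewrite ?normrN.
have := ler_normD (if c then -y else y) x. rewrite -addn1 natrD.
move: (if c then -y else y) hy => z hz. move: ((size s)%:R : rat) hx => n hx hh. apply: le_trans hh _. rewrite mulrDl mul1r addrC. exact: lerD.
Qed.

Lemma decompose Y : all (fun x => x \in Xset m K b) Y -> exists (N : int) s,
  [/\ (size s <= size Y)%N, all (fun p : bool * nat => (p.2 <= 3 * m)%N) s &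
  \sum_(x <- Y) x = (N%:~R / 3 + lambda_sum m K b s) * H m K].
Proof.
have HH := H_gt0.
elim: Y => [|x Y IH] /=.
  move=> _. exists 0, [::]; split; [exact: isT | exact: isT |]. rewrite /lambda_sum !big_nil. move: (H m K) HH => y hy.
  ring.
move=> /andP [Hx HY]. have [N [s [h1 h2 h3]]] := IH HY.
rewrite /Xset !mem_cat in Hx. case/or3P: Hx => [/mapP [i Hi ->] | Hx2 | Hx3].
- rewrite mem_iota in Hi.
  have [Hi1 Hi2] : (0 < i)%N /\ (i <= 3 * m)%N.
    move/andP: Hi => [G1 G2]. split; first exact: G1. by rewrite add1n ltnS in G2.
  exists (N + 1), ((false, i) :: s); split.
  + by rewrite /= ltnS.
  + by rewrite /= Hi2.
  +
  rewrite big_cons h3 /lambda_sum big_cons /= -/(lambda_sum m K b s).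
  have -> : beta m K b i = a m K b i / H m K - 3^-1.
    rewrite /beta ifF; first reflexivity. by rewrite eqn0Ngt Hi1.
  rewrite intrD. move: (a m K b i) (lambda_sum m K b s) (N%:~R : rat) (H m K) HH => u v w y hy.
  field. exact: lt0r_neq0 hy.
- move: Hx2; rewrite mem_nseq => /andP [_ /eqP ->].
  exists (N - 3), s; split; [exact: leqW h1 | exact: h2 |].
  rewrite big_cons h3 intrD. move: (lambda_sum m K b s) (N%:~R : rat) (H m K) HH => v w y hy.
  rewrite (_ : (- 3)%:~R = -3 :> rat) //. field. exact isT.
- move: Hx3; rewrite mem_nseq => /andP [_ /eqP ->].
  exists N, ((false, 0%N) :: s); split; [by rewrite /= ltnS | exact: h2 |].
  rewrite big_cons h3 /lambda_sum big_cons /= -/(lambda_sum m K b s).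
  rewrite /beta eqxx. move: (h m K) (lambda_sum m K b s) (N%:~R : rat) (H m K) HH => u v w y hy.
  field. exact: lt0r_neq0 hy.
Qed.

Lemma hM2' : 100 * (Mr ^+ 2 * eps m) = 1 / 100.
Proof.
rewrite /eps natrM. have := Mr_ge1. move: Mr => x hx. field.
apply: lt0r_neq0; lra.
Qed.

Lemma hMe' : 40 * (Mr * eps m) <= 1 / 250.
Proof.
have h2 := hM2'. have h1 := Mr_ge1. have he := eps_gt0.
have h3 : Mr * eps m <= Mr ^+ 2 * eps m.
  have := ler_wpM2r (mulr_ge0 (ler0n rat m) (ltW he)) h1.
  by rewrite mul1r expr2 -mulrA.
exact: lin1 h2 h3.
Qed.

Lemma core u v : type0 m K b u -> `|tval u + tval v| <= (5 * m)%:R * `|tval u| ->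
  all (fun x => x \in Xset m K b) (leaves v) -> (size (leaves v) <= 5 * m)%N ->
  type0 m K b v.
Proof.
move=> [su [/andP [Hsz Hall] Hu]] Hn Hmem Hsize.
have [N [s [h1 h2 h3]]] := @decompose (leaves v) Hmem.
rewrite -tval_sum in h3.
have [N0|N0] := eqVneq N 0.
  exists s; split; first by rewrite /is_lambda_seq (leq_trans h1 Hsize) h2.
  rewrite h3 N0. move: (lambda_sum m K b s) (H m K) => x y. ring.
exfalso.
have hlu := @lambda_bound su Hall. have hlv := @lambda_bound s h2.
have Hsu : (size su)%:R <= (5 * m)%:R :> rat by rewrite ler_nat.
have Hsv : (size s)%:R <= (5 * m)%:R :> rat by rewrite ler_nat (leq_trans h1 Hsize).
have hd : 0 <= 4 * eps m by apply: mulr_ge0; [exact: ler0n | exact: ltW eps_gt0].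
have hl1 : `|lambda_sum m K b su| <= 5 * Mr * (4 * eps m).
  rewrite -natrM. apply: le_trans hlu _. by have := ler_wpM2r hd Hsu.
have hl2 : `|lambda_sum m K b s| <= 5 * Mr * (4 * eps m).
  rewrite -natrM. apply: le_trans hlv _. by have := ler_wpM2r hd Hsv.
have HN : 1 <= (N%:~R : rat) \/ (N%:~R : rat) <= -1.
  exact: int_cases.
rewrite natrM in Hn.
refine (@arith _ _ _ _ _ _ _ _ H_gt0 eps_gt0 Mr_ge1 hM2' hMe' hl1 hl2 Hu h3 Hn HN).
Qed.

Lemma size_X : size (Xset m K b) = (5 * m)%N.
Proof. rewrite /Xset !size_cat size_map size_iota !size_nseq. lia. Qed.

Lemma sum_X : \sum_(x <- Xset m K b) x = 0.
Proof.
rewrite /Xset !big_cat /= big_map !big_nseq !iter_addr_0.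
rewrite (_ : iota 1 (3 * m) = index_iota 1 (3 * m).+1); last by rewrite /index_iota subSS subn0.
rewrite /a big_split /= -natr_sum Hs sumr_const_nat subSS subn0.
rewrite -[W m K *+ _]mulr_natl -[(- H m K) *+ m]mulr_natl -[h m K *+ m]mulr_natl /H /L !natrM.
move: (W m K) (h m K) Kr Mr => x y z w. ring.
Qed.

End Main.

Lemma cost_step (c c' cl a n : rat) : c <= c' + cl -> c' + cl <= c - a + n -> a <= n.
Proof. move=> h1 h2. lra. Qed.

Theorem lemma2p5 (m K : nat) (b : nat -> nat) (Tmin : atree) :
  (0 < m)%N -> (0 < K)%N ->
  (forall i, (1 <= i <= 3 * m)%N ->
     (K%:R / 4 < (b i)%:R :> rat) /\ ((b i)%:R < K%:R / 2 :> rat)) ->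
  (\sum_(1 <= i < (3 * m).+1) b i = m * K)%N ->
  min_cost_tree (Xset m K b) Tmin ->
  forall l r, subtree (ANode l r) Tmin ->
    (type0 m K b l -> type0 m K b r) /\ (type0 m K b r -> type0 m K b l).
Proof.
move=> Hm HK Hb Hs [HX Hmin] l r Hsub.
have T0 : tval Tmin = 0 by rewrite tval_sum (perm_big _ HX) (@sum_X m K b Hs).
have Hsz : size (leaves Tmin) = (5 * m)%N by rewrite (perm_size HX) (@size_X m K b).
have [Hsub1 Hsub2] := @subtree_leaves _ _ Hsub.
rewrite /= size_cat Hsz in Hsub2.
have Hml : all (fun x => x \in Xset m K b) (leaves l).
  apply/allP => x Hx. rewrite -(perm_mem HX). apply: Hsub1. by rewrite /= mem_cat Hx.
have Hmr : all (fun x => x \in Xset m K b) (leaves r).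
  apply/allP => x Hx. rewrite -(perm_mem HX). apply: Hsub1. by rewrite /= mem_cat Hx orbT.
have Hsl : (size (leaves l) <= 5 * m)%N by lia.
have Hsr : (size (leaves r) <= 5 * m)%N by lia.
split.
- move=> Hl.
  have [T' [Hp [Hv Hc]]] := @extract_l _ _ _ Hsub.
  have HT : addition_tree_over (Xset m K b) (ANode T' l).
    rewrite /addition_tree_over /=. rewrite perm_sym in Hp. exact: perm_trans Hp HX.
  have := Hmin _ HT. rewrite /= Hv T0 sub0r addNr normr0 add0r => Hc2.
  rewrite Hsz in Hc.
  apply: (@core m K b Hm HK Hb Hs l r Hl _ Hmr Hsr).
  exact: cost_step Hc2 Hc.
- move=> Hr.
  have [T' [Hp [Hv Hc]]] := @extract_r _ _ _ Hsub.
  have HT : addition_tree_over (Xset m K b) (ANode T' r).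
    rewrite /addition_tree_over /=. rewrite perm_sym in Hp. exact: perm_trans Hp HX.
  have := Hmin _ HT. rewrite /= Hv T0 sub0r addNr normr0 add0r => Hc2.
  rewrite Hsz in Hc.
  apply: (@core m K b Hm HK Hb Hs r l Hr _ Hml Hsl).
  rewrite addrC. exact: cost_step Hc2 Hc.
Qed.
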